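(* Let $D\ge1$ and $p\ge1$ be integers, let $h>0$, let $Q\subset\mathbb{R}^D$ and $R\subset\mathbb{R}^D$ be finite sets (query and reference points), and let $c_Q,c_R\in\mathbb{R}^D$. For multi-indices $\alpha<p$ define the far-field moments $$M_\alpha=\sum_{r\in R}\frac{1}{\alpha!}\left(\frac{r-c_R}{\sqrt{2h^2}}\right)^{\alpha},$$ and for multi-indices $\beta<p$ define the translated local moments $$L_\beta=\frac{(-1)^{|\beta|}}{\beta!}\sum_{\alpha<p}M_\alpha\,h_{\alpha+\beta}\!\left(\frac{c_Q-c_R}{\sqrt{2h^2}}\right).$$ For $q\in\mathbb{R}^D$ let $$\widetilde G(q)=\sum_{\beta<p}L_\beta\left(\frac{q-c_Q}{\sqrt{2h^2}}\right)^{\beta},\qquad G(q)=\sum_{r\in R}e^{-\|q-r\|^2/(2h^2)}.$$ Suppose there is $r_0$ with $0\le r_0<\tfrac12$ such that $\|q-c_Q\|_\infty<r_0h$ for all $q\in Q$ and $\|r-c_R\|_\infty<r_0h$ for all $r\in R$. Then for every $q\in Q$, $$\bigl|\widetilde G(q)-G(q)\bigr|\le\frac{|R|}{(1-2r_0)^{2D}}\sum_{k=0}^{D-1}\binom{D}{k}\bigl((1-(2r_0)^p)^2\bigr)^k\left(\frac{(2r_0)^p\,(2-(2r_0)^p)}{\sqrt{p!}}\right)^{D-k}.$$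
   Context: Hermite polynomials: $H_n(t)=(-1)^n e^{t^2}\frac{d^n}{dt^n}e^{-t^2}$ for $t\in\mathbb{R}$; Hermite functions: $h_n(t)=e^{-t^2}H_n(t)$. For a $D$-dimensional multi-index $\alpha=(\alpha[1],\dots,\alpha[D])$ of non-negative integers and $t\in\mathbb{R}^D$: $h_\alpha(t)=\prod_{d=1}^D h_{\alpha[d]}(t[d])$, $|\alpha|=\sum_d\alpha[d]$, $\alpha!=\prod_d\alpha[d]!$, $t^\alpha=\prod_d t[d]^{\alpha[d]}$, and $\alpha+\beta$ is componentwise addition. For an integer $p$, ''$\alpha<p$'' means $\alpha[d]<p$ for every $d$. $\|\cdot\|$ is the Euclidean norm, $\|\cdot\|_\infty$ the max norm, $|R|$ the number of points in $R$. *)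

(* Defs.v *)
From Stdlib Require Import Arith Factorial Reals Lra Lia List.
Import ListNotations.
Open Scope R_scope.

(* Points of R^D are lists of reals of length D; coordinate d is nth d x 0.
   Multi-indices are lists of nats of length D; alpha[d] = nth d alpha 0. *)

Definition sumL {A : Type} (l : list A) (f : A -> R) : R :=
  fold_right (fun a s => f a + s) 0 l.

Definition prodD (D : nat) (f : nat -> R) : R :=
  fold_right (fun d s => f d * s) 1 (seq 0 D).

Definition sumD (D : nat) (f : nat -> R) : R := sumL (seq 0 D) f.

Fixpoint mindices (D p : nat) : list (list nat) :=
  match D with
  | O => [ [] ]
  | S D' => flat_map (fun a => map (fun i => i :: a) (seq 0 p)) (mindices D' p)
  end.

Definition mfact (D : nat) (a : list nat) : R :=
  prodD D (fun d => INR (fact (nth d a 0%nat))).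

Definition mabs (D : nat) (a : list nat) : nat :=
  fold_right Nat.add 0%nat (map (fun d => nth d a 0%nat) (seq 0 D)).

Definition madd (D : nat) (a b : list nat) : list nat :=
  map (fun d => (nth d a 0%nat + nth d b 0%nat)%nat) (seq 0 D).

Definition mpow (D : nat) (t : list R) (a : list nat) : R :=
  prodD D (fun d => (nth d t 0) ^ (nth d a 0%nat)).

Definition vscale (D : nat) (x c : list R) (s : R) : list R :=
  map (fun d => (nth d x 0 - nth d c 0) / s) (seq 0 D).

Definition dist2 (D : nat) (x y : list R) : R :=
  sumD D (fun d => (nth d x 0 - nth d y 0) ^ 2).

Inductive nth_deriv : nat -> (R -> R) -> (R -> R) -> Prop :=
| nth_deriv_0 : forall f, nth_deriv 0 f f
| nth_deriv_S : forall n f f' g,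
    (forall t, derivable_pt_lim f t (f' t)) ->
    nth_deriv n f' g -> nth_deriv (S n) f g.

(* hf is the family of Hermite functions h_n(t) = e^{-t^2} H_n(t)
   = (-1)^n d^n/dt^n e^{-t^2}, with H_n the (Rodrigues) Hermite polynomials. *)
Definition is_hermite_functions (hf : nat -> R -> R) : Prop :=
  forall n, nth_deriv n (fun t => exp (- t ^ 2)) (fun t => (-1) ^ n * hf n t).

Definition hmulti (hf : nat -> R -> R) (D : nat) (a : list nat) (t : list R) : R :=
  prodD D (fun d => hf (nth d a 0%nat) (nth d t 0)).

Definition farM (D : nat) (h : R) (Rs : list (list R)) (cR : list R) (a : list nat) : R :=
  sumL Rs (fun r => / mfact D a * mpow D (vscale D r cR (sqrt (2 * h ^ 2))) a).

Definition locL (hf : nat -> R -> R) (D p : nat) (h : R) (Rs : list (list R))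
    (cQ cR : list R) (b : list nat) : R :=
  (-1) ^ (mabs D b) / mfact D b *
  sumL (mindices D p) (fun a =>
    farM D h Rs cR a * hmulti hf D (madd D a b) (vscale D cQ cR (sqrt (2 * h ^ 2)))).

Definition Gtilde (hf : nat -> R -> R) (D p : nat) (h : R) (Rs : list (list R))
    (cQ cR : list R) (q : list R) : R :=
  sumL (mindices D p) (fun b =>
    locL hf D p h Rs cQ cR b * mpow D (vscale D q cQ (sqrt (2 * h ^ 2))) b).

Definition Gauss (D : nat) (h : R) (Rs : list (list R)) (q : list R) : R :=
  sumL Rs (fun r => exp (- dist2 D q r / (2 * h ^ 2))).

(* Main.v *)
Require Import Defs.
From Stdlib Require Import Arith Factorial Reals List.
From Stdlib Require Import Lra Lia Psatz FunctionalExtensionality.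
Import ListNotations.
Open Scope R_scope.

Lemma dplus f g x a b : derivable_pt_lim f x a -> derivable_pt_lim g x b ->
  derivable_pt_lim (fun t => f t + g t) x (a + b).
Proof. intros; exact (derivable_pt_lim_plus f g x a b H H0). Qed.
Lemma dminus f g x a b : derivable_pt_lim f x a -> derivable_pt_lim g x b ->
  derivable_pt_lim (fun t => f t - g t) x (a - b).
Proof. intros; exact (derivable_pt_lim_minus f g x a b H H0). Qed.
Lemma dmult f g x a b : derivable_pt_lim f x a -> derivable_pt_lim g x b ->
  derivable_pt_lim (fun t => f t * g t) x (a * g x + f x * b).
Proof. intros; exact (derivable_pt_lim_mult f g x a b H H0). Qed.
Lemma dconst c x : derivable_pt_lim (fun _ => c) x 0.
Proof. exact (derivable_pt_lim_const c x). Qed.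
Lemma did x : derivable_pt_lim (fun t => t) x 1.
Proof. exact (derivable_pt_lim_id x). Qed.
Lemma dscal c f x a : derivable_pt_lim f x a -> derivable_pt_lim (fun t => c * f t) x (c * a).
Proof. intros; exact (derivable_pt_lim_scal f c x a H). Qed.
Lemma dpow n x : derivable_pt_lim (fun t => t ^ n) x (INR n * x ^ pred n).
Proof. exact (derivable_pt_lim_pow x n). Qed.
Lemma dcomp f g x a b : derivable_pt_lim g x a -> derivable_pt_lim f (g x) b ->
  derivable_pt_lim (fun t => f (g t)) x (b * a).
Proof. intros; exact (derivable_pt_lim_comp g f x a b H H0). Qed.
Lemma dext f g x a : (forall t, f t = g t) -> derivable_pt_lim f x a -> derivable_pt_lim g x a.
Proof. intros H; replace g with f; auto. apply functional_extensionality; auto. Qed.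
Lemma dval f x a b : a = b -> derivable_pt_lim f x a -> derivable_pt_lim f x b.
Proof. intros ->; auto. Qed.

Lemma nd_unique n f g1 g2 : nth_deriv n f g1 -> nth_deriv n f g2 -> forall t, g1 t = g2 t.
Proof.
  intros H; revert g2; induction H; intros g2 H2; inversion H2; subst; auto.
  assert (E : f' = f'0).
  { apply functional_extensionality; intro t. eapply uniqueness_limite; eauto. }
  subst. apply IHnth_deriv; auto.
Qed.

Lemma nd_last n : forall f g, nth_deriv (S n) f g ->
  exists k, nth_deriv n f k /\ forall t, derivable_pt_lim k t (g t).
Proof.
  induction n; intros f g H.
  - inversion H; subst. inversion H2; subst. exists f. split; [constructor|auto].
  - inversion H; subst. destruct (IHn _ _ H2) as [k [Hk Hd]].
    exists k; split; auto. econstructor; eauto.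
Qed.

Lemma m1sq i : (-1) ^ i * (-1) ^ i = 1.
Proof. induction i; simpl; [ring|]. replace (-1 * (-1) ^ i * (-1 * (-1) ^ i)) with ((-1) ^ i * (-1) ^ i) by ring. auto. Qed.

Section Herm.
Variable hf : nat -> R -> R.
Hypothesis Hhf : is_hermite_functions hf.

Lemma hf0 t : hf O t = exp (- t ^ 2).
Proof.
  pose proof (Hhf O) as H. inversion H as [f E|]. clear H.
  idtac.
  pose proof (f_equal (fun F => F t) H0) as E2. simpl in E2. simpl. lra.
Qed.

Lemma hfd n t : derivable_pt_lim (hf n) t (- hf (S n) t).
Proof.
  destruct (nd_last n _ _ (Hhf (S n))) as [k [Hk Hd]].
  pose proof (nd_unique _ _ _ _ Hk (Hhf n)) as E.
  eapply dext with (f := fun t => (-1) ^ n * k t).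
  { intro x. rewrite E. rewrite <- Rmult_assoc, m1sq. ring. }
  eapply dval; [|apply dscal, Hd]. simpl. rewrite <- Rmult_assoc.
  replace ((-1) ^ n * (-1 * (-1) ^ n)) with (- ((-1) ^ n * (-1) ^ n)) by ring.
  rewrite m1sq. ring.
Qed.

Lemma hfrec n : forall y, hf (S n) y = 2 * y * hf n y - 2 * INR n * hf (pred n) y.
Proof.
  induction n; intro y.
  - simpl. replace (2 * 0) with 0 by ring.
    assert (D1 := hfd O y).
    assert (D2 : derivable_pt_lim (hf 0) y (exp (- y ^ 2) * (- (INR 2 * y ^ 1)))).
    { apply dext with (f := fun t => exp (- t ^ 2)). { intro; rewrite hf0; auto. }
      apply (dcomp exp (fun t => - t ^ 2)). 
      - apply dext with (f := fun t => -1 * t ^ 2). intro; ring.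
        eapply dval; [|apply dscal, dpow]. simpl; ring.
      - apply derivable_pt_lim_exp. }
    pose proof (uniqueness_limite _ _ _ _ D1 D2). rewrite hf0. simpl in H. simpl. rewrite <- (Ropp_involutive (hf 1%nat y)), H. ring.
  - assert (D1 := hfd (S n) y).
    assert (D2 : derivable_pt_lim (hf (S n)) y
       (2 * hf n y + 2 * y * (- hf (S n) y) - 2 * INR n * (- hf (S (pred n)) y))).
    { apply dext with (f := fun t => 2 * t * hf n t - 2 * INR n * hf (pred n) t).
      { intro; rewrite IHn; auto. }
      assert (d2t : derivable_pt_lim (fun t => 2 * t) y 2).
      { eapply dval; [|apply dscal, did]. ring. }
      eapply dval; [|apply dminus; [apply dmult; [apply d2t|apply hfd]|apply dscal, hfd]].
      ring. }
    pose proof (uniqueness_limite _ _ _ _ D1 D2).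
    destruct n.
    + simpl in *. lra.
    + simpl pred in *. rewrite (S_INR (S n)). rewrite <- (Ropp_involutive (hf (S (S (S n))) y)), H. ring.
Qed.

Lemma hf_at0 : forall n, hf n 0 ^ 2 <= 2 ^ n * INR (fact n).
Proof.
  assert (forall n, hf n 0 ^ 2 <= 2 ^ n * INR (fact n) /\
                    hf (S n) 0 ^ 2 <= 2 ^ (S n) * INR (fact (S n))).
  { induction n.
    - rewrite hfrec, !hf0. simpl. replace (- (0 * (0 * 1))) with 0 by ring. rewrite exp_0. split; lra.
    - destruct IHn as [H1 H2]. split; auto.
      rewrite hfrec. simpl pred. replace (2 * 0 * hf (S n) 0) with 0 by ring.
      replace ((0 - 2 * INR (S n) * hf n 0) ^ 2) with (4 * INR (S n) ^ 2 * hf n 0 ^ 2) by ring.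
      replace (fact (S (S n))) with ((S (S n)) * (S n * fact n))%nat by reflexivity.
      rewrite !mult_INR. rewrite !S_INR in *.
      assert (0 <= INR n) by apply pos_INR.
      assert (0 < INR (fact n)) by (apply lt_0_INR, lt_O_fact).
      assert (0 < 2 ^ n) by (apply pow_lt; lra).
      simpl. 
      apply Rle_trans with (4 * (INR n + 1) ^ 2 * (2 ^ n * INR (fact n))).
      { apply Rmult_le_compat_l; [nra|auto]. }
      nra. }
  intro n; apply H.
Qed.

Lemma hf_bound2 n y : hf n y ^ 2 <= 4 ^ n * INR (fact n).
Proof.
  set (V := fun t => hf n t ^ 2 + 2 * INR n * hf (pred n) t ^ 2).
  assert (DV : forall t, derivable_pt_lim V t (- 4 * t * hf n t ^ 2)).
  { intro t. unfold V.
    eapply dval; [|apply dplus; [apply (dcomp (fun x => x ^ 2) (hf n)) | apply dscal, (dcomp (fun x => x ^ 2) (hf (pred n)))]].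
    2: apply hfd. 2: apply dpow. 2: apply hfd. 2: apply dpow.
    rewrite (hfrec n t). destruct n.
    - simpl. ring.
    - simpl pred. simpl. ring. }
  assert (V0 : V 0 <= 4 ^ n * INR (fact n)).
  { unfold V. destruct n.
    - simpl. rewrite hf0. simpl. replace (- (0*(0*1))) with 0 by ring. rewrite exp_0. lra.
    - simpl pred. pose proof (hf_at0 (S n)) as A1. pose proof (hf_at0 n) as A2.
      replace (fact (S n)) with (S n * fact n)%nat in * by reflexivity.
      rewrite mult_INR in *.
      assert (0 <= INR (S n)) by apply pos_INR.
      assert (0 < INR (fact n)) by (apply lt_0_INR, lt_O_fact).
      assert (2 ^ n <= 4 ^ n) by (apply pow_incr; lra).
      assert (0 < 2 ^ n) by (apply pow_lt; lra).
      replace (2 ^ S n) with (2 * 2 ^ n) in * by (simpl; ring).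
      replace (4 ^ S n) with (4 * 4 ^ n) in * by (simpl; ring).
      assert (2 * INR (S n) * hf n 0 ^ 2 <= 2 * INR (S n) * (2 ^ n * INR (fact n))) by
        (apply Rmult_le_compat_l; nra).
      set (X := INR (S n) * INR (fact n)).
      assert (0 <= X) by (unfold X; nra).
      assert (2 ^ n * X <= 4 ^ n * X) by (apply Rmult_le_compat_r; lra).
      unfold X in *. nra. }
  assert (Vle : V y <= V 0).
  { destruct (Rtotal_order y 0) as [Hy|[Hy|Hy]].
    - destruct (MVT_cor2 V (fun t => - 4 * t * hf n t ^ 2) y 0 Hy (fun c _ => DV c)) as [c [E Hc]].
      assert (0 <= hf n c ^ 2) by (apply pow2_ge_0).
      assert (0 <= (- 4 * c * hf n c ^ 2) * (0 - y)) by (apply Rmult_le_pos; nra). lra.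
    - subst; lra.
    - destruct (MVT_cor2 V (fun t => - 4 * t * hf n t ^ 2) 0 y Hy (fun c _ => DV c)) as [c [E Hc]].
      assert (0 <= hf n c ^ 2) by (apply pow2_ge_0).
      assert (0 <= (4 * c * hf n c ^ 2) * (y - 0)) by (apply Rmult_le_pos; nra). lra. }
  assert (0 <= INR n) by apply pos_INR.
  assert (0 <= hf (pred n) y ^ 2) by apply pow2_ge_0.
  assert (0 <= 2 * INR n * hf (pred n) y ^ 2) by (apply Rmult_le_pos; lra).
  assert (hf n y ^ 2 <= V y) by (unfold V; lra). lra.
Qed.
End Herm.

Lemma Rabs_le_inv' x a : Rabs x <= a -> - a <= x <= a.
Proof. unfold Rabs; destruct (Rcase_abs x); lra. Qed.

Lemma fact_S_INR p : INR (fact (S p)) = INR (S p) * INR (fact p).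
Proof. change (fact (S p)) with (S p * fact p)%nat. apply mult_INR. Qed.

Lemma INR_fact_pos p : 0 < INR (fact p).
Proof. apply lt_0_INR, lt_O_fact. Qed.

Lemma dpowfact p x : derivable_pt_lim (fun t => t ^ S p / INR (fact (S p))) x (x ^ p / INR (fact p)).
Proof.
  apply dext with (f := fun t => / INR (fact (S p)) * t ^ S p). { intro; unfold Rdiv; ring. }
  eapply dval; [|apply dscal, dpow]. simpl pred. rewrite fact_S_INR.
  assert (0 < INR (S p)) by (apply lt_0_INR; lia). pose proof (INR_fact_pos p).
  field. lra.
Qed.

Lemma cmp_pos R R' C p z : (forall t, derivable_pt_lim R t (R' t)) -> R 0 = 0 ->
  (forall t, Rabs (R' t) <= C * Rabs t ^ p / INR (fact p)) -> 0 <= z ->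
  Rabs (R z) <= C * z ^ S p / INR (fact (S p)).
Proof.
  intros HD H0 HB Hz. destruct (Req_dec z 0) as [->|Hz'].
  - rewrite H0, Rabs_R0. simpl. rewrite Rmult_0_l, Rmult_0_r. unfold Rdiv; lra.
  - assert (Hz2 : 0 < z) by lra.
    pose proof (INR_fact_pos p) as Fp.
    destruct (MVT_cor2 (fun t => R t - C * (t ^ S p / INR (fact (S p))))
                (fun t => R' t - C * (t ^ p / INR (fact p))) 0 z Hz2) as [c [E1 Hc]].
    { intros; apply dminus; auto. apply dscal, dpowfact. }
    destruct (MVT_cor2 (fun t => R t + C * (t ^ S p / INR (fact (S p))))
                (fun t => R' t + C * (t ^ p / INR (fact p))) 0 z Hz2) as [d [E2 Hd]].
    { intros; apply dplus; auto. apply dscal, dpowfact. }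
    rewrite H0, pow_i in E1, E2 by lia.
    unfold Rdiv in E1, E2. rewrite Rmult_0_l, Rmult_0_r, Rminus_0_r in E1, E2.
    rewrite Rplus_0_r in E2.
    pose proof (HB c) as Bc. pose proof (HB d) as Bd.
    rewrite (Rabs_right c) in Bc by lra. rewrite (Rabs_right d) in Bd by lra.
    apply Rabs_le_inv' in Bc. apply Rabs_le_inv' in Bd. unfold Rdiv in *.
    assert (0 <= (C * c ^ p * / INR (fact p) - R' c) * z) by (apply Rmult_le_pos; lra).
    assert (0 <= (R' d + C * d ^ p * / INR (fact p)) * z) by (apply Rmult_le_pos; lra).
    apply Rabs_le. split; nra.
Qed.

Lemma cmp R R' C p z : (forall t, derivable_pt_lim R t (R' t)) -> R 0 = 0 ->
  (forall t, Rabs (R' t) <= C * Rabs t ^ p / INR (fact p)) ->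
  Rabs (R z) <= C * Rabs z ^ S p / INR (fact (S p)).
Proof.
  intros HD H0 HB. destruct (Rle_dec 0 z).
  - rewrite (Rabs_right z) by lra. apply (cmp_pos R R'); auto.
  - rewrite (Rabs_left z) by lra.
    assert (HH := cmp_pos (fun t => R (- t)) (fun t => - R' (- t)) C p (- z)).
    cbv beta in HH. rewrite Ropp_involutive in HH. apply HH; [| |intro t; rewrite Rabs_Ropp, <- (Rabs_Ropp t); apply HB| lra].
    + intro t.
      assert (dn : derivable_pt_lim (fun t => - t) t (-1)).
      { apply dext with (f := fun t => -1 * t). intro; ring. eapply dval; [|apply dscal, did]. ring. }
      eapply dval; [|apply (dcomp R (fun t => - t)); [apply dn|apply HD]].
      ring.
    + simpl. rewrite Ropp_0; auto.
Qed.

Section Tay.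
Variable hf : nat -> R -> R.
Hypothesis Hhf : is_hermite_functions hf.

Definition G k y := (-1) ^ k * hf k y.
Definition Mb k := sqrt (4 ^ k * INR (fact k)).

Lemma Gd k y : derivable_pt_lim (G k) y (G (S k) y).
Proof.
  unfold G. eapply dval; [|apply dscal, hfd; auto]. simpl; ring.
Qed.

Lemma Gb k y : Rabs (G k y) <= Mb k.
Proof.
  unfold G, Mb. rewrite Rabs_mult, pow_1_abs, Rmult_1_l.
  rewrite <- sqrt_Rsqr_abs. apply sqrt_le_1_alt. unfold Rsqr.
  pose proof (hf_bound2 hf Hhf k y). simpl in H. lra.
Qed.

Definition tay k p y z := sumL (seq 0 p) (fun j => z ^ j / INR (fact j) * G (k + j) y).

Lemma sumL_app {A} (l1 l2 : list A) f : sumL (l1 ++ l2) f = sumL l1 f + sumL l2 f.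
Proof. induction l1; simpl; [ring|]. unfold sumL in *. simpl. rewrite IHl1. ring. Qed.

Lemma tayS k p y z : tay k (S p) y z = tay k p y z + z ^ p / INR (fact p) * G (k + p) y.
Proof. unfold tay. rewrite seq_S, sumL_app. unfold sumL at 2. simpl. ring. Qed.

Lemma tay0 k p y : tay k (S p) y 0 = G k y.
Proof.
  induction p.
  - unfold tay, sumL. simpl. rewrite Nat.add_0_r. field.
  - rewrite tayS, IHp. simpl. unfold Rdiv. ring.
Qed.

Lemma tayd k p y z : derivable_pt_lim (fun t => tay k (S p) y t) z (tay (S k) p y z).
Proof.
  revert k. induction p; intro k.
  - apply dext with (f := fun _ => G k y). { intro; unfold tay, sumL; simpl; rewrite Nat.add_0_r; field. }
    unfold tay, sumL; simpl. apply dconst.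
  - apply dext with (f := fun t => tay k (S p) y t + G (k + S p) y * (t ^ S p / INR (fact (S p)))).
    { intro; rewrite (tayS k (S p)); ring. }
    eapply dval; [|apply dplus; [apply IHp|apply dscal, dpowfact]].
    rewrite tayS. replace (S k + p)%nat with (k + S p)%nat by lia. ring.
Qed.

Lemma taylor p : forall k y z, Rabs (G k (y + z) - tay k p y z) <= Mb (k + p) * Rabs z ^ p / INR (fact p).
Proof.
  induction p; intros k y z.
  - unfold tay, sumL; simpl. rewrite Rminus_0_r, Nat.add_0_r. unfold Rdiv. rewrite Rinv_1, !Rmult_1_r. apply Gb.
  - replace (k + S p)%nat with (S k + p)%nat by lia.
    apply (cmp (fun t => G k (y + t) - tay k (S p) y t) (fun t => G (S k) (y + t) - tay (S k) p y t)).
    + intro t. apply dminus; [|apply tayd].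
      assert (dy : derivable_pt_lim (fun t => y + t) t 1).
      { eapply dval; [|apply dplus; [apply dconst|apply did]]. ring. }
      eapply dval; [|apply (dcomp (G k) (fun t => y + t)); [apply dy|apply Gd]].
      ring.
    + rewrite tay0, Rplus_0_r. ring.
    + intro t. apply IHp.
Qed.
End Tay.

Definition prodL (l : list nat) (f : nat -> R) : R := fold_right (fun d s => f d * s) 1 l.

Lemma sumL_nil {A} (f : A -> R) : sumL [] f = 0.
Proof. reflexivity. Qed.
Lemma sumL_cons {A} (a : A) l f : sumL (a :: l) f = f a + sumL l f.
Proof. reflexivity. Qed.
Lemma prodL_cons a l f : prodL (a :: l) f = f a * prodL l f.
Proof. reflexivity. Qed.

Lemma sumL_ext_in {A} (l : list A) f g : (forall x, In x l -> f x = g x) -> sumL l f = sumL l g.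
Proof. induction l; intros H; [reflexivity|]. rewrite !sumL_cons, H, IHl; simpl; auto; intros; apply H; simpl; auto. Qed.
Lemma sumL_ext {A} (l : list A) f g : (forall x, f x = g x) -> sumL l f = sumL l g.
Proof. intros; apply sumL_ext_in; auto. Qed.
Lemma prodL_ext_in l f g : (forall x, In x l -> f x = g x) -> prodL l f = prodL l g.
Proof. induction l; intros H; [reflexivity|]. rewrite !prodL_cons, H, IHl; simpl; auto; intros; apply H; simpl; auto. Qed.

Lemma sumL_scal_l {A} (l : list A) c f : c * sumL l f = sumL l (fun x => c * f x).
Proof. induction l; [unfold sumL; simpl; ring|]. rewrite !sumL_cons, <- IHl. ring. Qed.
Lemma sumL_scal_r {A} (l : list A) c f : sumL l f * c = sumL l (fun x => f x * c).
Proof. induction l; [unfold sumL; simpl; ring|]. rewrite !sumL_cons, <- IHl. ring. Qed.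
Lemma sumL_plus {A} (l : list A) f g : sumL l (fun x => f x + g x) = sumL l f + sumL l g.
Proof. induction l; [unfold sumL; simpl; ring|]. rewrite !sumL_cons, IHl. ring. Qed.
Lemma sumL_minus {A} (l : list A) f g : sumL l (fun x => f x - g x) = sumL l f - sumL l g.
Proof. induction l; [unfold sumL; simpl; ring|]. rewrite !sumL_cons, IHl. ring. Qed.
Lemma sumL_swap {A B} (l1 : list A) (l2 : list B) F :
  sumL l1 (fun a => sumL l2 (fun b => F a b)) = sumL l2 (fun b => sumL l1 (fun a => F a b)).
Proof.
  induction l1.
  - rewrite sumL_nil. induction l2; [reflexivity|]. rewrite sumL_cons, <- IHl2. rewrite !sumL_nil. ring.
  - rewrite sumL_cons, IHl1, <- sumL_plus. apply sumL_ext. intro; rewrite sumL_cons; ring.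
Qed.
Lemma sumL_const {A} (l : list A) c : sumL l (fun _ => c) = INR (length l) * c.
Proof. induction l; [unfold sumL; simpl; ring|]. rewrite sumL_cons, IHl. simpl length. rewrite S_INR. ring. Qed.
Lemma sumL_abs {A} (l : list A) f : Rabs (sumL l f) <= sumL l (fun x => Rabs (f x)).
Proof. induction l; [unfold sumL; simpl; rewrite Rabs_R0; lra|]. rewrite !sumL_cons.
  eapply Rle_trans; [apply Rabs_triang|]. lra. Qed.
Lemma sumL_le {A} (l : list A) f g : (forall x, In x l -> f x <= g x) -> sumL l f <= sumL l g.
Proof. induction l; intros H; [unfold sumL; simpl; lra|]. rewrite !sumL_cons.
  apply Rplus_le_compat; [apply H; simpl; auto|apply IHl; intros; apply H; simpl; auto]. Qed.
Lemma sumL_map {A B} (g : A -> B) l f : sumL (map g l) f = sumL l (fun x => f (g x)).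
Proof. induction l; [reflexivity|]. simpl map. rewrite !sumL_cons, IHl; auto. Qed.
Lemma sumL_flat_map {A B} (g : A -> list B) l f : sumL (flat_map g l) f = sumL l (fun a => sumL (g a) f).
Proof. induction l; [reflexivity|]. simpl flat_map. rewrite sumL_app, sumL_cons, IHl; auto. Qed.

Lemma prodL_mult l f g : prodL l f * prodL l g = prodL l (fun d => f d * g d).
Proof. induction l; [unfold prodL; simpl; ring|]. rewrite !prodL_cons, <- IHl. ring. Qed.
Lemma prodL_inv l f : / prodL l f = prodL l (fun d => / f d).
Proof. induction l; [unfold prodL; simpl; apply Rinv_1|]. rewrite !prodL_cons, <- IHl, Rinv_mult; auto. Qed.
Lemma prodL_map l f : prodL (map S l) f = prodL l (fun d => f (S d)).
Proof. induction l; [reflexivity|]. simpl map. rewrite !prodL_cons, IHl; auto. Qed.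
Lemma prodL_pow x l (f : nat -> nat) : x ^ (fold_right Nat.add 0%nat (map f l)) = prodL l (fun d => x ^ f d).
Proof. induction l; [reflexivity|]. simpl map. simpl fold_right. rewrite pow_add, IHl. reflexivity. Qed.

Lemma prodD_S D f : prodD (S D) f = f 0%nat * prodD D (fun d => f (S d)).
Proof.
  unfold prodD. change (seq 0 (S D)) with (0%nat :: seq 1 D). simpl fold_right.
  rewrite <- seq_shift. fold (prodL (map S (seq 0 D)) f). rewrite prodL_map. reflexivity.
Qed.

Lemma SP p D : forall (phi : nat -> nat -> R),
  sumL (mindices D p) (fun a => prodD D (fun d => phi d (nth d a 0%nat))) =
  prodD D (fun d => sumL (seq 0 p) (phi d)).
Proof.
  induction D; intro phi.
  - unfold prodD; simpl. unfold sumL; simpl. ring.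
  - simpl mindices. rewrite sumL_flat_map.
    rewrite prodD_S. rewrite <- (IHD (fun d => phi (S d))), sumL_scal_l.
    apply sumL_ext; intro a. rewrite sumL_map.
    rewrite sumL_scal_r. apply sumL_ext; intro i. rewrite prodD_S. simpl nth. ring.
Qed.

Lemma nth_map_seq {A} (f : nat -> A) D d dflt : (d < D)%nat -> nth d (map f (seq 0 D)) dflt = f d.
Proof.
  intro Hd. rewrite (nth_indep (map f (seq 0 D)) dflt (f 0%nat)) by (rewrite length_map, length_seq; auto).
  rewrite (map_nth f (seq 0 D) 0%nat d), seq_nth by auto. reflexivity.
Qed.

Lemma nth_vscale D x c s d : (d < D)%nat -> nth d (vscale D x c s) 0 = (nth d x 0 - nth d c 0) / s.
Proof. intro Hd. unfold vscale. rewrite nth_map_seq by auto. reflexivity. Qed.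

Lemma nth_madd D a b d : (d < D)%nat -> nth d (madd D a b) 0%nat = (nth d a 0 + nth d b 0)%nat.
Proof. intro Hd. unfold madd. rewrite nth_map_seq by auto. reflexivity. Qed.

Lemma reshape (I : list (list nat)) (Rs : list (list R)) (c : list nat -> R) (X : list R -> list nat -> R)
  (Y : list nat -> list nat -> R) (Z : list nat -> R) :
  sumL I (fun b => c b * sumL I (fun a => sumL Rs (fun r => X r a) * Y a b) * Z b) =
  sumL Rs (fun r => sumL I (fun b => sumL I (fun a => c b * X r a * Y a b * Z b))).
Proof.
  rewrite sumL_swap. apply sumL_ext; intro b.
  rewrite sumL_scal_l, sumL_scal_r. rewrite sumL_swap. apply sumL_ext; intro a.
  rewrite sumL_scal_r, sumL_scal_l, sumL_scal_r. apply sumL_ext; intro r. ring.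
Qed.

Definition phi (hf : nat -> R -> R) (D : nat) (h : R) (cQ cR q r : list R) (d i j : nat) : R :=
  (-1) ^ j * / INR (fact j) *
  (/ INR (fact i) * nth d (vscale D r cR (sqrt (2 * h ^ 2))) 0 ^ i) *
  hf (i + j)%nat (nth d (vscale D cQ cR (sqrt (2 * h ^ 2))) 0) *
  nth d (vscale D q cQ (sqrt (2 * h ^ 2))) 0 ^ j.

Lemma Gtilde_eq hf D p h Rs cQ cR q :
  Gtilde hf D p h Rs cQ cR q =
  sumL Rs (fun r => prodD D (fun d => sumL (seq 0 p) (fun j => sumL (seq 0 p) (fun i => phi hf D h cQ cR q r d i j)))).
Proof.
  unfold Gtilde, locL, farM. unfold Rdiv at 1.
  rewrite reshape. apply sumL_ext; intro r.
  rewrite <- (SP p D (fun d j => sumL (seq 0 p) (fun i => phi hf D h cQ cR q r d i j))).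
  apply sumL_ext; intro b.
  rewrite <- (SP p D (fun d i => phi hf D h cQ cR q r d i (nth d b 0%nat))).
  apply sumL_ext; intro a.
  unfold mabs, mfact, mpow, hmulti. unfold prodD.
  fold (prodL (seq 0 D) (fun d => INR (fact (nth d b 0%nat)))).
  fold (prodL (seq 0 D) (fun d => INR (fact (nth d a 0%nat)))).
  rewrite prodL_pow, !prodL_inv.
  fold (prodL (seq 0 D) (fun d => nth d (vscale D r cR (sqrt (2 * h ^ 2))) 0 ^ nth d a 0%nat)).
  fold (prodL (seq 0 D) (fun d => hf (nth d (madd D a b) 0%nat) (nth d (vscale D cQ cR (sqrt (2 * h ^ 2))) 0))).
  fold (prodL (seq 0 D) (fun d => nth d (vscale D q cQ (sqrt (2 * h ^ 2))) 0 ^ nth d b 0%nat)).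
  fold (prodL (seq 0 D) (fun d => phi hf D h cQ cR q r d (nth d a 0%nat) (nth d b 0%nat))).
  rewrite !prodL_mult. apply prodL_ext_in. intros d Hd. apply in_seq in Hd.
  rewrite nth_madd by lia. unfold phi. ring.
Qed.

Lemma fact_binom n : forall j p, (j + p = n)%nat -> (fact (j + p) <= 2 ^ (j + p) * fact j * fact p)%nat.
Proof.
  induction n as [n IH] using lt_wf_ind. intros j p E.
  destruct j as [|j].
  - rewrite Nat.add_0_l. change (fact 0) with 1%nat.
    pose proof (Nat.pow_le_mono_r 2 0 p ltac:(lia) ltac:(lia)). rewrite Nat.pow_0_r in H. nia.
  - destruct p as [|p].
    + rewrite Nat.add_0_r. change (fact 0) with 1%nat.
      pose proof (Nat.pow_le_mono_r 2 0 (S j) ltac:(lia) ltac:(lia)). rewrite Nat.pow_0_r in H. nia.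
    + assert (H1 := IH (j + S p)%nat ltac:(lia) j (S p) eq_refl).
      assert (H2 := IH (S j + p)%nat ltac:(lia) (S j) p eq_refl).
      replace (S j + S p)%nat with (S (j + S p)) by lia.
      replace (S j + p)%nat with (j + S p)%nat in H2 by lia.
      change (fact (S (j + S p))) with (S (j + S p) * fact (j + S p))%nat.
      change (2 ^ S (j + S p))%nat with (2 * 2 ^ (j + S p))%nat.
      change (fact (S j)) with (S j * fact j)%nat in *.
      change (fact (S p)) with (S p * fact p)%nat in *.
      replace (S (j + S p)) with (S j + S p)%nat by lia.
      set (F := fact (j + S p)) in *. set (P := (2 ^ (j + S p))%nat) in *.
      nia.
Qed.

Lemma sq_le a b : 0 <= b -> a ^ 2 <= b ^ 2 -> a <= b.
Proof. intros. nra. Qed.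

Lemma Mb_sq k : Mb k ^ 2 = 4 ^ k * INR (fact k).
Proof. unfold Mb. simpl. rewrite Rmult_1_r, sqrt_sqrt; auto.
  apply Rmult_le_pos; [apply pow_le; lra|apply pos_INR]. Qed.
Lemma Mb_pos k : 0 <= Mb k.
Proof. unfold Mb; apply sqrt_pos. Qed.

Lemma sqfact_sq p : sqrt (INR (fact p)) ^ 2 = INR (fact p).
Proof. simpl. rewrite Rmult_1_r, sqrt_sqrt; auto. apply pos_INR. Qed.

Lemma powsq y p : (y ^ p) ^ 2 = (y ^ 2) ^ p.
Proof. rewrite <- !pow_mult, Nat.mul_comm; reflexivity. Qed.

Lemma N1 p x r0 : 0 <= x -> x ^ 2 <= r0 ^ 2 / 2 -> 0 <= r0 ->
  Mb p * x ^ p / INR (fact p) <= (2 * r0) ^ p / sqrt (INR (fact p)).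
Proof.
  intros Hx Hx2 Hr. pose proof (INR_fact_pos p) as F.
  assert (SF : 0 < sqrt (INR (fact p))) by (apply sqrt_lt_R0; auto).
  apply sq_le. { unfold Rdiv; apply Rmult_le_pos; [apply pow_le; lra|left; apply Rinv_0_lt_compat; auto]. }
  assert (E1 : (Mb p * x ^ p / INR (fact p)) ^ 2 = 4 ^ p * (x ^ 2) ^ p / INR (fact p)).
  { replace ((Mb p * x ^ p / INR (fact p)) ^ 2) with (Mb p ^ 2 * (x ^ p) ^ 2 / INR (fact p) ^ 2) by (field; lra).
    rewrite Mb_sq, powsq. field; lra. }
  assert (E2 : ((2 * r0) ^ p / sqrt (INR (fact p))) ^ 2 = 4 ^ p * (r0 ^ 2) ^ p / INR (fact p)).
  { replace (((2 * r0) ^ p / sqrt (INR (fact p))) ^ 2) with (((2 * r0) ^ p) ^ 2 / sqrt (INR (fact p)) ^ 2) by (field; lra).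
    rewrite powsq, sqfact_sq. replace ((2 * r0) ^ 2) with (4 * r0 ^ 2) by ring. rewrite Rpow_mult_distr. reflexivity. }
  rewrite E1, E2.
  assert (Xp : (x ^ 2) ^ p <= (r0 ^ 2) ^ p).
  { apply pow_incr; split; [apply pow_le; auto|]. assert (0 <= r0^2) by (apply pow_le; auto). lra. }
  assert (0 <= 4 ^ p) by (apply pow_le; lra).
  unfold Rdiv. apply Rmult_le_compat_r; [left; apply Rinv_0_lt_compat; auto|]. apply Rmult_le_compat_l; auto.
Qed.

Lemma N2 j p x y r0 : 0 <= x -> 0 <= y -> x ^ 2 <= r0 ^ 2 / 2 -> y ^ 2 <= r0 ^ 2 / 2 -> 0 <= r0 ->
  x ^ j / INR (fact j) * (Mb (j + p) * y ^ p / INR (fact p)) <= (2 * r0) ^ (j + p) / sqrt (INR (fact p)).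
Proof.
  intros Hx Hy Hx2 Hy2 Hr. pose proof (INR_fact_pos p) as F. pose proof (INR_fact_pos j) as Fj.
  assert (SF : 0 < sqrt (INR (fact p))) by (apply sqrt_lt_R0; auto).
  apply sq_le. { unfold Rdiv; apply Rmult_le_pos; [apply pow_le; lra|left; apply Rinv_0_lt_compat; auto]. }
  set (n := (j + p)%nat).
  assert (E1 : (x ^ j / INR (fact j) * (Mb n * y ^ p / INR (fact p))) ^ 2 =
     ((x ^ 2) ^ j * (y ^ 2) ^ p) * (4 ^ n * INR (fact n) / (INR (fact j) ^ 2 * INR (fact p) ^ 2))).
  { replace ((x ^ j / INR (fact j) * (Mb n * y ^ p / INR (fact p))) ^ 2) with
      ((x ^ j) ^ 2 * (y ^ p) ^ 2 * Mb n ^ 2 / (INR (fact j) ^ 2 * INR (fact p) ^ 2)) by (field; lra).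
    rewrite Mb_sq, !powsq. field; lra. }
  assert (E2 : ((2 * r0) ^ n / sqrt (INR (fact p))) ^ 2 = 4 ^ n * (r0 ^ 2) ^ n / INR (fact p)).
  { replace (((2 * r0) ^ n / sqrt (INR (fact p))) ^ 2) with (((2 * r0) ^ n) ^ 2 / sqrt (INR (fact p)) ^ 2) by (field; lra).
    rewrite powsq, sqfact_sq. replace ((2 * r0) ^ 2) with (4 * r0 ^ 2) by ring. rewrite Rpow_mult_distr. reflexivity. }
  rewrite E1, E2.
  assert (Xp : (x ^ 2) ^ j <= (r0 ^ 2 / 2) ^ j).
  { apply pow_incr; split; [apply pow_le; auto|auto]. }
  assert (Yp : (y ^ 2) ^ p <= (r0 ^ 2 / 2) ^ p).
  { apply pow_incr; split; [apply pow_le; auto|auto]. }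
  assert (XY : (x ^ 2) ^ j * (y ^ 2) ^ p <= (r0 ^ 2) ^ n / 2 ^ n).
  { replace ((r0 ^ 2) ^ n / 2 ^ n) with ((r0 ^ 2 / 2) ^ j * (r0 ^ 2 / 2) ^ p).
    - apply Rmult_le_compat; auto; apply pow_le; auto; apply pow_le; auto.
    - unfold n. rewrite <- pow_add. unfold Rdiv. rewrite Rpow_mult_distr, pow_inv. reflexivity. }
  assert (FB : INR (fact n) <= 2 ^ n * INR (fact j) ^ 2 * INR (fact p)).
  { pose proof (fact_binom n j p eq_refl) as H. apply le_INR in H. rewrite !mult_INR, pow_INR in H.
    simpl INR in H at 2. replace (1 + 1) with 2 in H by ring.
    assert (1 <= INR (fact j)) by (apply (le_INR 1); apply lt_O_fact).
    assert (0 < 2 ^ n) by (apply pow_lt; lra).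
    eapply Rle_trans; [apply H|].
    assert (0 < 2 ^ (j + p)) by (apply pow_lt; lra).
    assert (0 <= 2 ^ (j + p) * INR (fact j) * INR (fact p)) by (apply Rmult_le_pos; [apply Rmult_le_pos|]; lra).
    replace (2 ^ n * INR (fact j) ^ 2 * INR (fact p)) with ((2 ^ (j + p) * INR (fact j) * INR (fact p)) * INR (fact j)) by (unfold n; ring).
    rewrite <- (Rmult_1_r (2 ^ (j + p) * INR (fact j) * INR (fact p))) at 1.
    apply Rmult_le_compat_l; auto. }
  assert (P4 : 0 < 4 ^ n) by (apply pow_lt; lra).
  assert (P2 : 0 < 2 ^ n) by (apply pow_lt; lra).
  assert (0 <= (r0 ^ 2) ^ n) by (apply pow_le; apply pow_le; auto).
  assert (0 <= 4 ^ n * INR (fact n) / (INR (fact j) ^ 2 * INR (fact p) ^ 2)).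
  { unfold Rdiv; apply Rmult_le_pos; [apply Rmult_le_pos; [lra|apply pos_INR]|].
    left; apply Rinv_0_lt_compat; apply Rmult_lt_0_compat; apply pow_lt; auto. }
  eapply Rle_trans; [apply Rmult_le_compat_r; [auto|apply XY]|].
  replace ((r0 ^ 2) ^ n / 2 ^ n * (4 ^ n * INR (fact n) / (INR (fact j) ^ 2 * INR (fact p) ^ 2))) with
     ((4 ^ n * (r0 ^ 2) ^ n / INR (fact p)) * (INR (fact n) / (2 ^ n * INR (fact j) ^ 2 * INR (fact p)))) by (field; lra).
  rewrite <- (Rmult_1_r (4 ^ n * (r0 ^ 2) ^ n / INR (fact p))) at 2.
  apply Rmult_le_compat_l.
  { unfold Rdiv; apply Rmult_le_pos; [apply Rmult_le_pos; lra|left; apply Rinv_0_lt_compat; auto]. }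
  assert (0 < 2 ^ n * INR (fact j) ^ 2 * INR (fact p)) by (apply Rmult_lt_0_compat; [apply Rmult_lt_0_compat; [|apply pow_lt]|]; auto).
  unfold Rdiv. rewrite <- (Rinv_r (2 ^ n * INR (fact j) ^ 2 * INR (fact p))) by lra. apply Rmult_le_compat_r; [left; apply Rinv_0_lt_compat; auto|auto].
Qed.

Lemma geom rho p : sumL (seq 0 p) (fun j => rho ^ j) * (1 - rho) = 1 - rho ^ p.
Proof.
  induction p. { unfold sumL; simpl; ring. }
  rewrite seq_S, sumL_app. unfold sumL at 2. simpl fold_right. simpl pow.
  rewrite Rmult_plus_distr_r, IHp. simpl. ring.
Qed.

Lemma N3 rho p sp : (1 <= p)%nat -> 0 <= rho < 1 -> 0 < sp ->
  sumL (seq 0 p) (fun j => rho ^ (j + p) / sp) + rho ^ p / sp <= rho ^ p * (2 - rho ^ p) / sp / (1 - rho) ^ 2.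
Proof.
  intros Hp Hr Hs.
  rewrite (sumL_ext _ _ (fun j => rho ^ p / sp * rho ^ j)) by (intro; rewrite pow_add; unfold Rdiv; ring).
  rewrite <- sumL_scal_l. pose proof (geom rho p) as Gm.
  set (Gs := sumL (seq 0 p) (fun j => rho ^ j)) in *. set (X := rho ^ p) in *.
  assert (HX : 0 <= X <= rho).
  { unfold X. destruct p; [lia|]. simpl. split; [apply Rmult_le_pos; [lra|apply pow_le; lra]|].
    assert (rho ^ p <= 1) by (rewrite <- (pow1 p); apply pow_incr; lra). nra. }
  assert (K : (Gs + 1) * (1 - rho) ^ 2 <= 2 - X).
  { replace ((Gs + 1) * (1 - rho) ^ 2) with ((Gs * (1 - rho)) * (1 - rho) + (1 - rho) ^ 2) by ring.
    rewrite Gm. nra. }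
  assert (P : 0 < (1 - rho) ^ 2) by (apply pow_lt; lra).
  replace (X / sp * Gs + X / sp) with (X / sp * ((Gs + 1) * (1 - rho) ^ 2) / (1 - rho) ^ 2) by (field; lra).
  replace (X * (2 - X) / sp / (1 - rho) ^ 2) with (X / sp * (2 - X) / (1 - rho) ^ 2) by (field; lra).
  unfold Rdiv. apply Rmult_le_compat_r; [left; apply Rinv_0_lt_compat; auto|].
  apply Rmult_le_compat_l; auto. apply Rmult_le_pos; [lra|left; apply Rinv_0_lt_compat; auto].
Qed.

Section Coord.
Variable hf : nat -> R -> R.
Hypothesis Hhf : is_hermite_functions hf.

Lemma coord p r0 u t c : (1 <= p)%nat -> 0 <= r0 < 1 / 2 -> u ^ 2 <= r0 ^ 2 / 2 -> t ^ 2 <= r0 ^ 2 / 2 ->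
  Rabs (sumL (seq 0 p) (fun j => sumL (seq 0 p) (fun i =>
      (-1) ^ j * / INR (fact j) * (/ INR (fact i) * u ^ i) * hf (i + j)%nat c * t ^ j))
     - exp (- (c - u + t) ^ 2))
  <= (2 * r0) ^ p * (2 - (2 * r0) ^ p) / sqrt (INR (fact p)) / (1 - 2 * r0) ^ 2.
Proof.
  intros Hp Hr Hu Ht. set (w := - u).
  assert (T1 : sumL (seq 0 p) (fun j => sumL (seq 0 p) (fun i =>
      (-1) ^ j * / INR (fact j) * (/ INR (fact i) * u ^ i) * hf (i + j)%nat c * t ^ j)) =
      sumL (seq 0 p) (fun j => t ^ j / INR (fact j) * tay hf j p c w)).
  { apply sumL_ext; intro j. unfold tay. rewrite sumL_scal_l. apply sumL_ext; intro i. unfold G, w.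
    replace ((- u) ^ i) with ((-1) ^ i * u ^ i) by (rewrite <- Rpow_mult_distr; f_equal; ring).
    rewrite (Nat.add_comm i j), pow_add. rewrite <- (Rmult_1_r ((-1) ^ j)) at 1. rewrite <- (m1sq i).
    pose proof (INR_fact_pos i). pose proof (INR_fact_pos j). field. lra. }
  assert (E : exp (- (c - u + t) ^ 2) = G hf 0 ((c + w) + t)).
  { unfold G, w. rewrite (hf0 hf Hhf). simpl pow at 1. rewrite Rmult_1_l. replace (c + - u + t) with (c - u + t) by ring; reflexivity. }
  rewrite T1, E.
  assert (Split : sumL (seq 0 p) (fun j => t ^ j / INR (fact j) * tay hf j p c w) - G hf 0 ((c + w) + t) =
     sumL (seq 0 p) (fun j => t ^ j / INR (fact j) * (tay hf j p c w - G hf j (c + w))) +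
     (tay hf 0 p (c + w) t - G hf 0 ((c + w) + t))).
  { assert (H0 : tay hf 0 p (c + w) t = sumL (seq 0 p) (fun j => t ^ j / INR (fact j) * G hf j (c + w))) by reflexivity.
    assert (H1 : sumL (seq 0 p) (fun j => t ^ j / INR (fact j) * (tay hf j p c w - G hf j (c + w))) =
       sumL (seq 0 p) (fun j => t ^ j / INR (fact j) * tay hf j p c w) - sumL (seq 0 p) (fun j => t ^ j / INR (fact j) * G hf j (c + w))).
    { rewrite <- sumL_minus. apply sumL_ext; intro; ring. }
    rewrite H0, H1. ring. }
  rewrite Split.
  assert (Hr2 : 0 <= 2 * r0 < 1) by lra.
  pose proof (INR_fact_pos p) as Fp.
  assert (SF : 0 < sqrt (INR (fact p))) by (apply sqrt_lt_R0; auto).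
  eapply Rle_trans; [|apply (N3 (2 * r0) p (sqrt (INR (fact p)))); auto].
  eapply Rle_trans; [apply Rabs_triang|]. apply Rplus_le_compat.
  - eapply Rle_trans; [apply sumL_abs|]. apply sumL_le. intros j _.
    rewrite Rabs_mult. unfold Rdiv. rewrite Rabs_mult, <- RPow_abs, Rabs_inv, (Rabs_right (INR (fact j))) by (pose proof (INR_fact_pos j); lra).
    eapply Rle_trans; [apply Rmult_le_compat_l; [|rewrite Rabs_minus_sym; apply taylor; auto]|].
    { apply Rmult_le_pos; [apply pow_le, Rabs_pos|left; apply Rinv_0_lt_compat, INR_fact_pos]. }
    fold (Rdiv (Rabs t ^ j) (INR (fact j))).
    apply N2; try apply Rabs_pos; try lra.
    + rewrite pow2_abs; auto.
    + unfold w. rewrite pow2_abs. replace ((- u) ^ 2) with (u ^ 2) by ring. auto.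
  - rewrite Rabs_minus_sym. eapply Rle_trans; [apply taylor; auto|].
    apply N1; [apply Rabs_pos| rewrite pow2_abs; auto| lra].
Qed.
End Coord.

Lemma prodL_abs_le l E A : 0 <= A -> (forall d, In d l -> Rabs (E d) <= A) -> Rabs (prodL l E) <= A ^ length l.
Proof.
  intros HA; induction l; intro H.
  - unfold prodL; simpl. rewrite Rabs_R1; lra.
  - rewrite prodL_cons, Rabs_mult. simpl length. simpl pow.
    apply Rmult_le_compat; try apply Rabs_pos; [apply H; simpl; auto|apply IHl; intros; apply H; simpl; auto].
Qed.

Lemma PL l T E A B : 0 <= A ->
  (forall d, In d l -> Rabs (E d) <= A /\ Rabs (T d - E d) <= B) ->
  Rabs (prodL l T - prodL l E) <= (A + B) ^ length l - A ^ length l.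
Proof.
  intros HA; induction l; intro H.
  - unfold prodL; simpl. replace (1 - 1) with 0 by ring. rewrite Rabs_R0; lra.
  - rewrite !prodL_cons. simpl length. simpl pow.
    destruct (H a (or_introl eq_refl)) as [H1 H2].
    assert (IH := IHl (fun d Hd => H d (or_intror Hd))).
    assert (PE := prodL_abs_le l E A HA (fun d Hd => proj1 (H d (or_intror Hd)))).
    assert (0 <= B) by (eapply Rle_trans; [apply Rabs_pos|apply H2]).
    replace (T a * prodL l T - E a * prodL l E) with (T a * (prodL l T - prodL l E) + (T a - E a) * prodL l E) by ring.
    eapply Rle_trans; [apply Rabs_triang|]. rewrite !Rabs_mult.
    assert (Rabs (T a) <= A + B).
    { replace (T a) with (E a + (T a - E a)) by ring. eapply Rle_trans; [apply Rabs_triang|]. lra. }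
    assert (0 <= A ^ length l) by (apply pow_le; auto).
    apply Rle_trans with ((A + B) * ((A + B) ^ length l - A ^ length l) + B * A ^ length l).
    + apply Rplus_le_compat; apply Rmult_le_compat; try apply Rabs_pos; auto.
    + lra.
Qed.

Lemma sumL_sum_f f n : sumL (seq 0 (S n)) f = sum_f_R0 f n.
Proof.
  induction n. { unfold sumL; simpl; ring. }
  rewrite seq_S, sumL_app, IHn. simpl. unfold sumL; simpl. ring.
Qed.

Lemma Cnn D : C D D = 1.
Proof. unfold C. rewrite Nat.sub_diag. simpl fact. pose proof (INR_fact_pos D). simpl INR. field. lra. Qed.

Lemma binom_diff A B D : sumL (seq 0 D) (fun k => C D k * A ^ k * B ^ (D - k)) = (A + B) ^ D - A ^ D.
Proof.
  rewrite binomial, <- sumL_sum_f, seq_S, sumL_app, sumL_cons, sumL_nil. simpl Nat.add.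
  rewrite Nat.sub_diag, Cnn. simpl pow. ring.
Qed.

Lemma expsum l f K : exp (- sumL l f / K) = prodL l (fun d => exp (- f d / K)).
Proof.
  induction l.
  - unfold sumL, prodL; simpl. replace (- 0 / K) with 0 by (unfold Rdiv; ring). apply exp_0.
  - rewrite sumL_cons, prodL_cons, <- IHl, <- exp_plus. f_equal. unfold Rdiv; ring.
Qed.

Theorem mainTheorem2
  (hf : nat -> R -> R) (Hhf : is_hermite_functions hf)
  (D p : nat) (HD : (1 <= D)%nat) (Hp : (1 <= p)%nat)
  (h : R) (Hh : 0 < h)
  (Qs Rs : list (list R)) (HQnd : NoDup Qs) (HRnd : NoDup Rs)
  (HQlen : forall q, In q Qs -> length q = D)
  (HRlen : forall r, In r Rs -> length r = D)
  (cQ cR : list R) (HcQ : length cQ = D) (HcR : length cR = D)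
  (r0 : R) (Hr0 : 0 <= r0 < 1 / 2)
  (HQ : forall q, In q Qs -> forall d, (d < D)%nat -> Rabs (nth d q 0 - nth d cQ 0) < r0 * h)
  (HR : forall r, In r Rs -> forall d, (d < D)%nat -> Rabs (nth d r 0 - nth d cR 0) < r0 * h) :
  forall q, In q Qs ->
    Rabs (Gtilde hf D p h Rs cQ cR q - Gauss D h Rs q) <=
    INR (length Rs) / (1 - 2 * r0) ^ (2 * D) *
    sumL (seq 0 D) (fun k =>
      C D k * ((1 - (2 * r0) ^ p) ^ 2) ^ k *
      ((2 * r0) ^ p * (2 - (2 * r0) ^ p) / sqrt (INR (fact p))) ^ (D - k)).
Proof.
  intros q Hq.
  set (S := sqrt (2 * h ^ 2)).
  assert (HS2 : S * S = 2 * h ^ 2) by (unfold S; apply sqrt_sqrt; nra).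
  assert (HS : 0 < S) by (unfold S; apply sqrt_lt_R0; nra).
  set (rho := 2 * r0).
  set (e := (1 - rho) ^ 2).
  assert (He : 0 < e) by (unfold e; apply pow_lt; unfold rho; lra).
  set (a := (1 - rho ^ p) ^ 2). set (b := rho ^ p * (2 - rho ^ p) / sqrt (INR (fact p))).
  assert (HX : 0 <= rho ^ p <= rho).
  { unfold rho. destruct p; [lia|]. simpl. split; [apply Rmult_le_pos; [lra|apply pow_le; lra]|].
    assert ((2 * r0) ^ p <= 1) by (rewrite <- (pow1 p); apply pow_incr; lra). nra. }
  assert (HA : 1 <= a / e).
  { assert (e <= a) by (unfold e, a; apply pow_incr; unfold rho in *; lra).
    unfold Rdiv. rewrite <- (Rinv_r e) by lra. apply Rmult_le_compat_r; auto. left; apply Rinv_0_lt_compat; auto. }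
  assert (RHS : INR (length Rs) / (1 - rho) ^ (2 * D) *
    sumL (seq 0 D) (fun k => C D k * a ^ k * b ^ (D - k)) =
    INR (length Rs) * ((a / e + b / e) ^ D - (a / e) ^ D)).
  { rewrite <- binom_diff. rewrite pow_mult. fold e.
    unfold Rdiv at 1. rewrite Rmult_assoc, sumL_scal_l. f_equal. apply sumL_ext_in. intros k Hk.
    apply in_seq in Hk. unfold Rdiv. rewrite !Rpow_mult_distr, !pow_inv.
    replace (e ^ D) with (e ^ k * e ^ (D - k)) by (rewrite <- pow_add; f_equal; lia).
    assert (0 < e ^ k) by (apply pow_lt; auto). assert (0 < e ^ (D - k)) by (apply pow_lt; auto).
    field. lra. }
  rewrite RHS.
  rewrite Gtilde_eq. unfold Gauss. rewrite <- sumL_minus.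
  eapply Rle_trans; [apply sumL_abs|].
  rewrite <- sumL_const. apply sumL_le. intros r Hr.
  unfold dist2, sumD. rewrite expsum. unfold prodD.
  eapply Rle_trans; [apply (PL (seq 0 D) _ _ (a / e) (b / e)) | rewrite length_seq; lra]; [lra|]. intros d Hd. apply in_seq in Hd. assert (Hd' : (d < D)%nat) by lia.
  set (u := nth d (vscale D r cR (sqrt (2 * h ^ 2))) 0).
  set (t := nth d (vscale D q cQ (sqrt (2 * h ^ 2))) 0).
  set (c := nth d (vscale D cQ cR (sqrt (2 * h ^ 2))) 0).
  assert (Ed : - (nth d q 0 - nth d r 0) ^ 2 / (2 * h ^ 2) = - (c - u + t) ^ 2).
  { unfold u, t, c. rewrite !nth_vscale by auto. fold S. rewrite <- HS2. field. lra. }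
  rewrite Ed. split.
  - rewrite Rabs_right by (left; apply exp_pos).
    assert (exp (- (c - u + t) ^ 2) <= 1).
    { rewrite <- exp_0. assert (0 <= (c - u + t) ^ 2) by apply pow2_ge_0.
      destruct (Req_dec ((c - u + t) ^ 2) 0) as [E0|E0].
      - rewrite E0, Ropp_0. lra.
      - left. apply exp_increasing. lra. }
    lra.
  - assert (Bsq : forall x, Rabs x < r0 * h -> (x / S) ^ 2 <= r0 ^ 2 / 2).
    { intros x Hx. assert (x ^ 2 <= (r0 * h) ^ 2).
      { rewrite <- pow2_abs. apply pow_incr; split; [apply Rabs_pos|lra]. }
      replace ((x / S) ^ 2) with (x ^ 2 / (2 * h ^ 2)) by (rewrite <- HS2; field; lra).
      unfold Rdiv. apply Rle_trans with ((r0 * h) ^ 2 * / (2 * h ^ 2)).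
      + apply Rmult_le_compat_r; auto. left; apply Rinv_0_lt_compat; nra.
      + right; field; lra. }
    unfold b, e, rho. apply (coord hf Hhf p r0 u t c); auto.
    + unfold u. rewrite nth_vscale by auto. apply Bsq. apply HR; auto.
    + unfold t. rewrite nth_vscale by auto. apply Bsq. apply HQ; auto.
Qed.
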